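(* For each $\eta\in(0,\eta_4)$ and each integer $j\ge1$, we have $\{z_k:k\ge j\}\subset D(0,|z_j|)$ and the broken segment $z_0z_1\cdots z_{j-1}$ is contained in $\mathbb{C}\setminus D(0,|z_j|)$.
   Context: For $\eta\in(0,\pi/3)$ let $a=\frac{e^{-i\eta}}{2\cos\eta}$, $c=\frac{1}{1-|a|^4}$, $z_k=ca^{k+1}$ for $k\ge0$. Let $\Phi_4(\eta)=(1-|a|^4)\sin3\eta-|a|^3\sin2\eta+|a|^4\sin\eta$; it has a unique zero in $(\pi/4,\pi/3)$, denoted $\eta_4$. $D(0,r)$ is the closed disk of radius $r$ centered at $0$; $v_0v_1\cdots v_n$ denotes the union of the segments $v_{i-1}v_i$, $i=1,\dots,n$ (for $j=1$ it is the single point $z_0$). *)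

(* Defs.v *)
From Stdlib Require Import Reals Lra.
From Coquelicot Require Import Coquelicot.
Open Scope R_scope.

(* a = e^{-i eta} / (2 cos eta), with e^{-i eta} = cos eta - i sin eta *)
Definition a_of (eta : R) : C :=
  (((cos eta, - sin eta)%R : C) / RtoC (2 * cos eta))%C.

Definition c_of (eta : R) : R := 1 / (1 - (Cmod (a_of eta)) ^ 4).

Definition z_of (eta : R) (k : nat) : C :=
  (RtoC (c_of eta) * Cpow (a_of eta) (S k))%C.

Definition Phi4 (eta : R) : R :=
  let r := Cmod (a_of eta) in
  (1 - r ^ 4) * sin (3 * eta) - r ^ 3 * sin (2 * eta) + r ^ 4 * sin eta.

Definition closed_disk0 (r : R) (w : C) : Prop := Cmod w <= r.

Definition segment (u v w : C) : Prop :=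
  exists t : R, 0 <= t <= 1 /\ w = (RtoC (1 - t) * u + RtoC t * v)%C.

Definition broken_segment (z : nat -> C) (n : nat) (w : C) : Prop :=
  (n = 0%nat /\ w = z 0%nat) \/
  (exists i : nat, (1 <= i <= n)%nat /\ segment (z (pred i)) (z i) w).

(* Main.v *)
Require Import Defs.
From Stdlib Require Import Reals Lra Psatz Lia.
From Coquelicot Require Import Coquelicot.
Open Scope R_scope.

Lemma pow_decr (r : R) (n m : nat) : 0 <= r <= 1 -> (n <= m)%nat -> r ^ m <= r ^ n.
Proof.
  intros Hr Hnm. induction Hnm. lra.
  simpl. assert (0 <= r ^ m) by (apply pow_le; lra). nra.
Qed.

Lemma a_eq (eta : R) : cos eta <> 0 ->
  a_of eta = ((1/2)%R, (- sin eta / (2 * cos eta))%R).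
Proof.
  intro H. unfold a_of, Cdiv, Cmult, Cinv, RtoC; simpl.
  apply injective_projections; simpl; field; auto.
Qed.

Lemma Cmod_a (eta : R) : 0 < cos eta -> Cmod (a_of eta) = 1 / (2 * cos eta).
Proof.
  intro H. rewrite a_eq by lra. unfold Cmod; simpl.
  replace ((1/2) * ((1/2) * 1) + (- sin eta / (2 * cos eta)) * ((- sin eta / (2 * cos eta)) * 1))
    with ((1 / (2 * cos eta)) ^ 2).
  apply sqrt_pow2. apply Rlt_le; apply Rdiv_lt_0_compat; lra.
  pose proof (sin2_cos2 eta). unfold Rsqr in *. field_simplify; try lra.
  replace (sin eta ^ 2) with (1 - cos eta ^ 2) by (simpl; nra). field. lra.
Qed.

Lemma Cmod_z (eta : R) (k : nat) : 0 < c_of eta ->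
  Cmod (z_of eta k) = c_of eta * Cmod (a_of eta) ^ (S k).
Proof.
  intro Hc. unfold z_of. rewrite Cmod_mult, Cmod_pow, Cmod_R, Rabs_pos_eq; lra.
Qed.

Lemma quad (s t : R) : 0 < s -> s ^ 2 < 1/2 -> 0 <= t <= 1 -> s ^ 2 < 1 - t + s * t ^ 2.
Proof.
  intros Hs Hs2 Ht.
  destruct (Rle_lt_dec (2 * s) 1).
  - assert ((1 - t) * (1 - s * (1 + t)) >= 0) by (apply Rle_ge; apply Rmult_le_pos; nra).
    nra.
  - assert (s * (1 - s^2) > 1/4) by nra.
    assert (s * (t - 1 / (2 * s)) ^ 2 >= 0).
    { apply Rle_ge, Rmult_le_pos; [lra| apply pow2_ge_0]. }
    replace (1 - t + s * t ^ 2) with (s * (t - 1 / (2 * s)) ^ 2 + 1 - 1 / (4 * s))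
      by (field; lra).
    assert (1 / (4 * s) < 1 - s ^ 2).
    { apply (Rmult_lt_reg_l (4 * s)); [lra|]. field_simplify; nra. }
    lra.
Qed.


Lemma Phi4_eq (x : R) : 0 < cos x ->
  Phi4 x = sin x * (4 * cos x ^ 2 - 1) * (16 * cos x ^ 4 - 2) / (16 * cos x ^ 4).
Proof.
  intro Hc. unfold Phi4. rewrite Cmod_a by lra.
  replace (3 * x) with (2 * x + x) by ring.
  rewrite sin_plus, cos_2a, !sin_2a.
  pose proof (sin2_cos2 x). unfold Rsqr in *.
  field_simplify; try lra.
  assert (Hs: sin x ^ 3 = sin x * (1 - cos x ^ 2)). { replace (1 - cos x^2) with (sin x * sin x) by (simpl; lra). ring. } rewrite Hs.
  field. lra.
Qed.

Lemma cos4_eta4 (eta4 : R) : PI / 4 < eta4 < PI / 3 -> Phi4 eta4 = 0 ->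
  1/2 < cos eta4 /\ 16 * cos eta4 ^ 4 = 2.
Proof.
  intros H Hz. pose proof PI_RGT_0.
  assert (Hc : cos (PI/3) < cos eta4) by (apply cos_decreasing_1; lra).
  rewrite cos_PI3 in Hc.
  assert (Hs : 0 < sin eta4) by (apply sin_gt_0; lra).
  rewrite Phi4_eq in Hz by lra.
  split; [lra|].
  assert (H4 : 0 < 4 * cos eta4 ^ 2 - 1) by nra.
  assert (H16 : 0 < 16 * cos eta4 ^ 4) by (apply Rmult_lt_0_compat; [lra| apply pow_lt; lra]).
  unfold Rdiv in Hz.
  apply Rmult_integral in Hz. destruct Hz as [Hz|Hz].
  - apply Rmult_integral in Hz. destruct Hz as [Hz|Hz]; [|lra].
    apply Rmult_integral in Hz. destruct Hz; lra.
  - exfalso. apply Rinv_neq_0_compat in Hz; lra.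
Qed.

Theorem lemma5p4 (eta4 : R)
  (Heta4 : PI / 4 < eta4 < PI / 3)
  (Hzero : Phi4 eta4 = 0)
  (Huniq : forall x : R, PI / 4 < x < PI / 3 -> Phi4 x = 0 -> x = eta4) :
  forall (eta : R), 0 < eta < eta4 ->
  forall (j : nat), (1 <= j)%nat ->
    (forall k : nat, (j <= k)%nat ->
       closed_disk0 (Cmod (z_of eta j)) (z_of eta k)) /\
    (forall w : C, broken_segment (z_of eta) (pred j) w ->
       ~ closed_disk0 (Cmod (z_of eta j)) w).
Proof.
  intros eta Heta j Hj.
  destruct (cos4_eta4 eta4 Heta4 Hzero) as [Hc4 H16].
  pose proof PI_RGT_0.
  assert (Hcc : cos eta4 < cos eta) by (apply cos_decreasing_1; lra).
  set (ce := cos eta) in *.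
  assert (Hce4 : 2 < 16 * ce ^ 4).
  { assert (cos eta4 ^ 4 < ce ^ 4) by (assert (cos eta4 * cos eta4 < ce * ce) by nra; simpl; nra). lra. }
  assert (Hce1 : ce <= 1) by (pose proof (COS_bound eta) as Hb; fold ce in Hb; lra).
  assert (Hr : Cmod (a_of eta) = 1 / (2 * ce)) by (apply Cmod_a; fold ce; lra).
  set (r := Cmod (a_of eta)) in *.
  assert (Hr0 : 0 < r) by (rewrite Hr; apply Rdiv_lt_0_compat; lra).
  assert (Hr1 : r < 1) by (rewrite Hr; apply (Rmult_lt_reg_l (2*ce)); [lra|]; field_simplify; lra).
  assert (Hr4 : r ^ 4 < 1/2).
  { rewrite Hr. apply (Rmult_lt_reg_l (16 * ce ^ 4)); [lra|]. field_simplify; try lra.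
    }
  assert (Hc : 0 < c_of eta).
  { unfold c_of. fold r. apply Rdiv_lt_0_compat; lra. }
  split.
  - intros k Hk. unfold closed_disk0. rewrite !Cmod_z by lra. fold r.
    apply Rmult_le_compat_l; [lra|]. apply pow_decr; [lra|lia].
  - intros w Hw Hd. unfold closed_disk0 in Hd. rewrite Cmod_z in Hd by lra. fold r in Hd.
    destruct Hw as [[H0 Hw]|[i [Hi [t [Ht Hw]]]]].
    + subst w. rewrite Cmod_z in Hd by lra. fold r in Hd.
      assert (r ^ S j <= r ^ 2) by (apply pow_decr; [lra|lia]).
      assert (r * r < r) by nra. simpl (r ^ 1) in Hd. simpl (r ^ 2) in H. rewrite ?Rmult_1_r in Hd, H. assert (c_of eta * (r ^ S j) <= c_of eta * (r * r)) by (apply Rmult_le_compat_l; lra). assert (c_of eta * (r * r) < c_of eta * r) by (apply Rmult_lt_compat_l; lra). lra.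
    + destruct i as [|i]; [lia|]. simpl pred in Hw.
      assert (Hw' : w = (RtoC (c_of eta) * Cpow (a_of eta) (S i) *
                          ((RtoC (1 - t)) + RtoC t * a_of eta))%C).
      { rewrite Hw. unfold z_of. simpl Cpow.
        destruct (a_of eta) as [p q]. destruct (Cpow (p, q) i) as [u v].
        unfold RtoC, Cmult, Cplus; simpl.
        apply injective_projections; simpl; ring. }
      rewrite Hw', !Cmod_mult, Cmod_pow, Cmod_R, Rabs_pos_eq in Hd by lra. fold r in Hd.
      assert (Hv : r ^ 2 < Cmod (RtoC (1 - t) + RtoC t * a_of eta)%C).
      { assert (ce <> 0) by lra.
        rewrite a_eq by (fold ce; lra). fold ce. clearbody r. unfold Cmod, RtoC, Cplus, Cmult; cbn [fst snd].
        rewrite <- (sqrt_pow2 (r ^ 2)) by (apply pow_le; lra).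
        apply sqrt_lt_1_alt. split; [apply pow2_ge_0|].
        pose proof (quad (r^2) t) as Hq.
        assert (0 < r ^ 2) by (apply pow_lt; lra).
        assert ((r^2)^2 < 1/2) by (rewrite <- pow_mult; simpl; lra).
        specialize (Hq H1 H2 Ht).
        match goal with |- _ < ?X => replace X
          with (1 - t + r^2 * t^2) end.
        rewrite <- pow_mult. simpl (2*2)%nat. lra.
        rewrite Hr. pose proof (sin2_cos2 eta). unfold Rsqr in *. fold ce in H3.
        field_simplify; try lra.
        replace (sin eta ^ 2) with (1 - ce ^ 2) by (simpl; nra). field. auto. }
      assert (HH : r ^ S j <= r ^ (S i + 2)) by (apply pow_decr; [lra|lia]).
      rewrite pow_add in HH.
      assert (0 < r ^ S i) by (apply pow_lt; lra).
      assert (r ^ S i * r ^ 2 < r ^ S i * Cmod (RtoC (1 - t) + RtoC t * a_of eta)%C)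
        by (apply Rmult_lt_compat_l; lra).
      assert (c_of eta * (r ^ S i * r ^ 2) < c_of eta * (r ^ S i * Cmod (RtoC (1 - t) + RtoC t * a_of eta)%C))
        by (apply Rmult_lt_compat_l; lra).
      assert (c_of eta * r ^ S j <= c_of eta * (r ^ S i * r ^ 2)) by (apply Rmult_le_compat_l; lra).
      rewrite Rmult_assoc in Hd. lra.
Qed.
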